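(* Let $\mathcal{X}=\{x\in\mathbb{R}^n:\|x\|_2\le1\}$, $\mathcal{Y}=\{1,\dots,|\mathcal{Y}|\}$, $K\ge1$, $N\ge1$ and $\alpha>0$. Consider the neural networks $h_{\mathbf{w}}(x)=W h^K(\cdots h^1(x))+b$ with $W\in\mathbb{R}^{|\mathcal{Y}|\times N}$, $b\in\mathbb{R}^{|\mathcal{Y}|}$, and layers $h^i(u)=\mathrm{proj}(\mathrm{leaky}(W_iu+b_i))$ where $W_1\in\mathbb{R}^{N\times n}$, $W_i\in\mathbb{R}^{N\times N}$ for $i\ge2$, $b_i\in\mathbb{R}^N$; here $\mathrm{leaky}$ is the Leaky ReLU $t\mapsto\max(t,at)$ (with a fixed slope $a\in(0,1)$) applied elementwise and $\mathrm{proj}$ is the Euclidean projection onto the closed unit $\ell_2$-ball of $\mathbb{R}^N$. Let $\mathbf{w}$ denote the vector concatenating all entries of $W,W_K,\dots,W_1,b,b_K,\dots,b_1$. Let the loss be $\ell(h,(x,y))=\frac{1}{|\mathcal{Y}|}\sum_{y'\ne y}\max\big(0,1-\alpha(h(x)[y]-h(x)[y'])\big)$, where $h(x)[y]$ denotes the $y$-th coordinate. Then for all parameter vectors $\mathbf{w},\mathbf{w}'$ such that every weight matrix ($W,W_1,\dots,W_K$ in both) has Frobenius norm at most $1$ (no constraint on biases), and for all $(x,y)\in\mathcal{X}\times\mathcal{Y}$, \[ |\ell(h_{\mathbf{w}},(x,y))-\ell(h_{\mathbf{w}'},(x,y))|\le\alpha\sqrt{2(K+2)}\,\|\mathbf{w}-\mathbf{w}'\|_2.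 \] *)

(* Defs.v *)
From HB Require Import structures.
From mathcomp Require Import all_boot all_order all_algebra.
From mathcomp Require Import reals.
Set Implicit Arguments. Unset Strict Implicit. Unset Printing Implicit Defensive.
Import Order.TTheory GRing.Theory Num.Theory.
Local Open Scope ring_scope.

Section Defs.
Variable R : realType.

Definition vnorm d (v : 'cV[R]_d) : R := Num.sqrt (\sum_(i < d) v i 0 ^+ 2).

Definition frob p q (A : 'M[R]_(p, q)) : R :=
  Num.sqrt (\sum_(i < p) \sum_(j < q) A i j ^+ 2).

Definition leaky (a t : R) : R := Num.max t (a * t).
Definition leakyv d (a : R) (v : 'cV[R]_d) : 'cV[R]_d := \col_i leaky a (v i 0).

Definition proj d (v : 'cV[R]_d) : 'cV[R]_d :=
  if vnorm v <= 1 then v else (vnorm v)^-1 *: v.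

Definition layer p q (a : R) (Wi : 'M[R]_(p, q)) (bi : 'cV[R]_p) (u : 'cV[R]_q)
  : 'cV[R]_p := proj (leakyv a (Wi *m u + bi)).

(* Parameters of a network with input dimension n, width N, m labels and
   K = k.+1 hidden layers: W, b (output), W1, b1 (first layer) and
   Wh i, bh i (the layer number i+2, for i < k). *)
Record params (m N n k : nat) := Params {
  pW  : 'M[R]_(m, N);
  pb  : 'cV[R]_m;
  pW1 : 'M[R]_(N, n);
  pb1 : 'cV[R]_N;
  pWh : 'I_k -> 'M[R]_N;
  pbh : 'I_k -> 'cV[R]_N }.

Definition net m N n k (a : R) (w : params m N n k) (x : 'cV[R]_n) : 'cV[R]_m :=
  let u1 := layer a (pW1 w) (pb1 w) x in
  let uK := foldl (fun u (i : 'I_k) => layer a (pWh w i) (pbh w i) u) u1 (enum 'I_k) in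
  pW w *m uK + pb w.

Definition loss m (alpha : R) (hx : 'cV[R]_m) (y : 'I_m) : R :=
  (m%:R)^-1 * \sum_(y' < m | y' != y) Num.max 0 (1 - alpha * (hx y 0 - hx y' 0)).

Definition pdist2 m N n k (w w' : params m N n k) : R :=
  \sum_(i < m) \sum_(j < N) (pW w i j - pW w' i j) ^+ 2
  + \sum_(i < N) \sum_(j < n) (pW1 w i j - pW1 w' i j) ^+ 2
  + \sum_(l < k) \sum_(i < N) \sum_(j < N) (pWh w l i j - pWh w' l i j) ^+ 2
  + \sum_(i < m) (pb w i 0 - pb w' i 0) ^+ 2
  + \sum_(i < N) (pb1 w i 0 - pb1 w' i 0) ^+ 2
  + \sum_(l < k) \sum_(i < N) (pbh w l i 0 - pbh w' l i 0) ^+ 2.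

Definition pdist m N n k (w w' : params m N n k) : R := Num.sqrt (pdist2 w w').

Definition weights_bounded m N n k (w : params m N n k) : Prop :=
  frob (pW w) <= 1 /\ frob (pW1 w) <= 1 /\ forall l : 'I_k, frob (pWh w l) <= 1.

End Defs.

(* Main.v *)
Require Import Defs.
From HB Require Import structures.
From mathcomp Require Import all_boot all_order all_algebra.
From mathcomp Require Import reals.
From mathcomp Require Import ring lra.
Import Order.TTheory GRing.Theory Num.Theory.
Local Open Scope ring_scope.

Section H.
Variable R : realType.

Lemma CS (I : finType) (P : pred I) (a b : I -> R) :
  (\sum_(i | P i) a i * b i) ^+ 2 <=
  (\sum_(i | P i) a i ^+ 2) * (\sum_(i | P i) b i ^+ 2).
Proof.
set A := \sum_(i | P i) a i ^+ 2.
set B := \sum_(i | P i) b i ^+ 2.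
set C := \sum_(i | P i) a i * b i.
have H : 0 <= \sum_(i | P i) \sum_(j | P j) (a i * b j - a j * b i) ^+ 2.
  by apply: sumr_ge0 => i _; apply: sumr_ge0 => j _; apply: sqr_ge0.
have E0 : \sum_(i | P i) \sum_(j | P j) (a i * b j - a j * b i) ^+ 2 =
  \sum_(i | P i) \sum_(j | P j) (a i ^+ 2 * b j ^+ 2 + a j ^+ 2 * b i ^+ 2
      - 2 * ((a i * b i) * (a j * b j))).
  by apply: eq_bigr => i _; apply: eq_bigr => j _; ring.
have e1 : \sum_(i | P i) \sum_(j | P j) a i ^+ 2 * b j ^+ 2 = A * B.
  by rewrite /A mulr_suml; apply: eq_bigr => i _; rewrite mulr_sumr.
have e2 : \sum_(i | P i) \sum_(j | P j) a j ^+ 2 * b i ^+ 2 = A * B.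
  rewrite /A mulrC mulr_suml; apply: eq_bigr => i _; rewrite mulr_sumr.
  by apply: eq_bigr => j _; rewrite mulrC.
have e3 : \sum_(i | P i) \sum_(j | P j) ((a i * b i) * (a j * b j)) = C * C.
  by rewrite /C mulr_suml; apply: eq_bigr => i _; rewrite mulr_sumr.
have e : \sum_(i | P i) \sum_(j | P j) (a i ^+ 2 * b j ^+ 2 + a j ^+ 2 * b i ^+ 2
      - 2 * ((a i * b i) * (a j * b j))) =
   \sum_(i | P i) \sum_(j | P j) a i ^+ 2 * b j ^+ 2
   + \sum_(i | P i) \sum_(j | P j) a j ^+ 2 * b i ^+ 2
   - 2 * \sum_(i | P i) \sum_(j | P j) ((a i * b i) * (a j * b j)).
  rewrite mulr_sumr -big_split -sumrB; apply: eq_bigr => i _.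
  by rewrite mulr_sumr -big_split -sumrB.
rewrite E0 e e1 e2 e3 in H.
rewrite expr2; lra.
Qed.


Lemma sqrt_le (X Y : R) : 0 <= Y -> X <= Y ^+ 2 -> Num.sqrt X <= Y.
Proof.
move=> hY hX; rewrite -(ger0_norm hY) -sqrtr_sqr ler_sqrt //.
exact: sqr_ge0.
Qed.

Lemma vnorm_ge0 d (v : 'cV[R]_d) : 0 <= vnorm v.
Proof. exact: sqrtr_ge0. Qed.

Lemma vnorm_sq d (v : 'cV[R]_d) : vnorm v ^+ 2 = \sum_i v i 0 ^+ 2.
Proof. by rewrite sqr_sqrtr //; apply: sumr_ge0 => i _; apply: sqr_ge0. Qed.

Lemma frob_ge0 p q (A : 'M[R]_(p, q)) : 0 <= frob A.
Proof. exact: sqrtr_ge0. Qed.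

Lemma frob_sq p q (A : 'M[R]_(p, q)) : frob A ^+ 2 = \sum_i \sum_j A i j ^+ 2.
Proof.
by rewrite sqr_sqrtr //; apply: sumr_ge0 => i _; apply: sumr_ge0 => j _; apply: sqr_ge0.
Qed.

Lemma dot_le d (u v : 'cV[R]_d) : \sum_i u i 0 * v i 0 <= vnorm u * vnorm v.
Proof.
have h := CS _ (fun _ => true) (fun i => u i 0) (fun i => v i 0).
rewrite -!vnorm_sq -exprMn in h.
have h0 : 0 <= vnorm u * vnorm v by rewrite mulr_ge0 // vnorm_ge0.
move: h h0; set C := \sum_i _; set D := vnorm u * vnorm v => h h0.
nra.
Qed.

Lemma vnormD d (u v : 'cV[R]_d) : vnorm (u + v) <= vnorm u + vnorm v.
Proof.
apply: sqrt_le; first by rewrite addr_ge0 // vnorm_ge0.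
have e : \sum_i (u + v) i 0 ^+ 2 =
  \sum_i u i 0 ^+ 2 + \sum_i v i 0 ^+ 2 + 2 * \sum_i u i 0 * v i 0.
  rewrite mulr_sumr -!big_split; apply: eq_bigr => i _; rewrite !mxE /=; ring.
rewrite e -!vnorm_sq.
have := dot_le _ u v; lra.
Qed.

Lemma vnormN d (u : 'cV[R]_d) : vnorm (- u) = vnorm u.
Proof. by rewrite /vnorm; congr Num.sqrt; apply: eq_bigr => i _; rewrite mxE sqrrN. Qed.

Lemma vnormB d (u v : 'cV[R]_d) : vnorm (u - v) = vnorm (v - u).
Proof. by rewrite -vnormN opprB. Qed.

Lemma vnormZ d (c : R) (u : 'cV[R]_d) : vnorm (c *: u) = `|c| * vnorm u.
Proof.
rewrite /vnorm -sqrtr_sqr -sqrtrM ?sqr_ge0 //; congr Num.sqrt.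
by rewrite mulr_sumr; apply: eq_bigr => i _; rewrite mxE exprMn.
Qed.

Lemma vnorm_mul p q (A : 'M[R]_(p, q)) (u : 'cV[R]_q) :
  vnorm (A *m u) <= frob A * vnorm u.
Proof.
apply: sqrt_le; first by rewrite mulr_ge0 // ?frob_ge0 ?vnorm_ge0.
rewrite exprMn frob_sq vnorm_sq mulr_suml; apply: ler_sum => i _.
rewrite mxE; exact: (CS _ (fun _ => true) (fun j => A i j) (fun j => u j 0)).
Qed.


Lemma leakyE (a t : R) : 0 < a -> a < 1 -> leaky a t = if 0 <= t then t else a * t.
Proof.
move=> ha0 ha1; rewrite /leaky maxEle.
case: (leP t (a * t)) => h1; case: (leP 0 t) => h2 //; nra.
Qed.

Lemma leaky_lip2 (a s t : R) : 0 < a -> a < 1 ->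
  (leaky a s - leaky a t) ^+ 2 <= (s - t) ^+ 2.
Proof.
move=> ha0 ha1; rewrite !leakyE //.
case: (leP 0 s) => h1; case: (leP 0 t) => h2.
- by [].
- have h3 : 0 <= s - a * t by nra.
  have h4 : s - a * t <= s - t by nra.
  nra.
- have h3 : 0 <= t - a * s by nra.
  have h4 : t - a * s <= t - s by nra.
  nra.
- rewrite -mulrBr exprMn; have : a ^+ 2 <= 1 by nra.
  have := sqr_ge0 (s - t); nra.
Qed.

Lemma leakyv_lip d (a : R) (u v : 'cV[R]_d) : 0 < a -> a < 1 ->
  vnorm (leakyv a u - leakyv a v) <= vnorm (u - v).
Proof.
move=> ha0 ha1; rewrite /vnorm ler_sqrt; last by apply: sumr_ge0 => i _; apply: sqr_ge0.
apply: ler_sum => i _; rewrite !mxE; exact: leaky_lip2.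
Qed.

Lemma real_proj (s r D : R) : 0 <= s -> 0 <= r -> D <= s * r ->
  (if s <= 1 then 1 else s^-1) ^+ 2 * s ^+ 2 + (if r <= 1 then 1 else r^-1) ^+ 2 * r ^+ 2
  - 2 * ((if s <= 1 then 1 else s^-1) * (if r <= 1 then 1 else r^-1) * D)
  <= s ^+ 2 + r ^+ 2 - 2 * D.
Proof.
move=> hs hr hD.
case: (leP s 1) => h1; case: (leP r 1) => h2.
- by rewrite !expr1n !mul1r.
- set t := r^-1.
  have rt : r * t = 1 by rewrite /t mulfV // gt_eqF // (lt_trans ltr01 h2).
  have t1 : t <= 1 by rewrite /t invf_le1 // ?ltW // (lt_trans ltr01 h2).
  have t0 : 0 <= t by rewrite /t invr_ge0.
  have Dr : D <= r by nra.
  have h3 : D * (1 - t) <= r * (1 - t) by rewrite ler_wpM2r // subr_ge0.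
  have e : t ^+ 2 * r ^+ 2 = 1 by rewrite -exprMn mulrC rt expr1n.
  rewrite e expr1n !mul1r; nra.
- set t := s^-1.
  have rt : s * t = 1 by rewrite /t mulfV // gt_eqF // (lt_trans ltr01 h1).
  have t1 : t <= 1 by rewrite /t invf_le1 // ?ltW // (lt_trans ltr01 h1).
  have t0 : 0 <= t by rewrite /t invr_ge0.
  have Dr : D <= s by nra.
  have h3 : D * (1 - t) <= s * (1 - t) by rewrite ler_wpM2r // subr_ge0.
  have e : t ^+ 2 * s ^+ 2 = 1 by rewrite -exprMn mulrC rt expr1n.
  rewrite e expr1n !mul1r; nra.
- set p := s^-1; set q := r^-1.
  have sp : s * p = 1 by rewrite /p mulfV // gt_eqF // (lt_trans ltr01 h1).
  have rq : r * q = 1 by rewrite /q mulfV // gt_eqF // (lt_trans ltr01 h2).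
  have p0 : 0 <= p by rewrite /p invr_ge0.
  have q0 : 0 <= q by rewrite /q invr_ge0.
  have e1 : p ^+ 2 * s ^+ 2 = 1 by rewrite -exprMn mulrC sp expr1n.
  have e2 : q ^+ 2 * r ^+ 2 = 1 by rewrite -exprMn mulrC rq expr1n.
  set c := p * q * D.
  have pq0 : 0 <= p * q by rewrite mulr_ge0.
  have c1' : c <= 1.
    have : c <= p * q * (s * r) by rewrite /c ler_wpM2l.
    have -> : p * q * (s * r) = (s * p) * (r * q) by ring.
    by rewrite sp rq mul1r.
  have eD : D = c * s * r.
    have -> : c * s * r = (s * p) * (r * q) * D by rewrite /c; ring.
    by rewrite sp rq !mul1r.
  have h3 : 0 <= (s * r - 1) * (1 - c).
    rewrite mulr_ge0 // ?subr_ge0 //; nra.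
  rewrite e1 e2; have := sqr_ge0 (s - r); rewrite eD; nra.
Qed.

Lemma projE d (u : 'cV[R]_d) :
  proj u = (if vnorm u <= 1 then 1 else (vnorm u)^-1) *: u.
Proof. by rewrite /proj; case: ifP; rewrite ?scale1r. Qed.

Lemma proj_le1 d (u : 'cV[R]_d) : vnorm (proj u) <= 1.
Proof.
rewrite /proj; case: ifP => // /negbT; rewrite -ltNge => h.
rewrite vnormZ ger0_norm ?invr_ge0 ?vnorm_ge0 // mulVf // gt_eqF //.
exact: lt_trans ltr01 h.
Qed.

Lemma proj_lip d (u v : 'cV[R]_d) : vnorm (proj u - proj v) <= vnorm (u - v).
Proof.
rewrite !projE.
have h := real_proj _ _ _ (vnorm_ge0 _ u) (vnorm_ge0 _ v) (dot_le _ u v).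
rewrite !vnorm_sq in h.
set c1 := (if vnorm u <= 1 then 1 else (vnorm u)^-1) in h *.
set c2 := (if vnorm v <= 1 then 1 else (vnorm v)^-1) in h *.
rewrite /vnorm ler_sqrt; last by apply: sumr_ge0 => i _; apply: sqr_ge0.
have e1 : \sum_i (c1 *: u - c2 *: v) i 0 ^+ 2 =
  c1 ^+ 2 * \sum_i u i 0 ^+ 2 + c2 ^+ 2 * \sum_i v i 0 ^+ 2
  - 2 * (c1 * c2 * \sum_i u i 0 * v i 0).
  rewrite !mulr_sumr -big_split -sumrB; apply: eq_bigr => i _; rewrite !mxE /=; ring.
have e2 : \sum_i (u - v) i 0 ^+ 2 =
  \sum_i u i 0 ^+ 2 + \sum_i v i 0 ^+ 2 - 2 * \sum_i u i 0 * v i 0.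
  rewrite !mulr_sumr -big_split -sumrB; apply: eq_bigr => i _; rewrite !mxE /=; ring.
by rewrite e1 e2.
Qed.


Lemma vnorm0 d : vnorm (0 : 'cV[R]_d) = 0.
Proof. by rewrite /vnorm big1 ?sqrtr0 // => i _; rewrite mxE expr0n. Qed.

Lemma aff_lip p q (W W' : 'M[R]_(p, q)) (b b' : 'cV[R]_p) (u u' : 'cV[R]_q) :
  vnorm u <= 1 -> frob W' <= 1 ->
  vnorm ((W *m u + b) - (W' *m u' + b')) <= frob (W - W') + vnorm (u - u') + vnorm (b - b').
Proof.
move=> hu hW.
have -> : (W *m u + b) - (W' *m u' + b') = (W - W') *m u + W' *m (u - u') + (b - b').
  rewrite mulmxBl mulmxBr; apply/matrixP => i j; rewrite !mxE; ring.
apply: le_trans (vnormD _ _ _) _; rewrite lerD2r.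
apply: le_trans (vnormD _ _ _) _; apply: lerD.
  apply: le_trans (vnorm_mul _ _ _ _) _.
  by rewrite -{2}(mulr1 (frob _)) ler_wpM2l // frob_ge0.
apply: le_trans (vnorm_mul _ _ _ _) _.
by rewrite -{2}(mul1r (vnorm _)) ler_wpM2r // vnorm_ge0.
Qed.

Lemma layer_lip p q (a : R) (W W' : 'M[R]_(p, q)) (b b' : 'cV[R]_p) (u u' : 'cV[R]_q) :
  0 < a -> a < 1 -> vnorm u <= 1 -> frob W' <= 1 ->
  vnorm (layer a W b u - layer a W' b' u') <= frob (W - W') + vnorm (u - u') + vnorm (b - b').
Proof.
move=> ha0 ha1 hu hW; rewrite /layer.
apply: le_trans (proj_lip _ _ _) _.
apply: le_trans (leakyv_lip _ _ _ _ ha0 ha1) _.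
exact: aff_lip.
Qed.

Lemma fold_lip (I : Type) N (a : R) (Wf Wf' : I -> 'M[R]_N) (bf bf' : I -> 'cV[R]_N)
  (s : seq I) (u u' : 'cV[R]_N) :
  0 < a -> a < 1 -> (forall i, frob (Wf' i) <= 1) -> vnorm u <= 1 ->
  vnorm (foldl (fun u i => layer a (Wf i) (bf i) u) u s
         - foldl (fun u i => layer a (Wf' i) (bf' i) u) u' s)
  <= vnorm (u - u') + \sum_(i <- s) (frob (Wf i - Wf' i) + vnorm (bf i - bf' i)).
Proof.
move=> ha0 ha1 hW; elim: s u u' => [|i s IH] u u' hu /=.
  by rewrite big_nil addr0.
apply: le_trans (IH _ _ (proj_le1 _ _)) _.
rewrite big_cons addrA lerD2r.
apply: le_trans (layer_lip _ _ _ _ _ _ _ _ _ ha0 ha1 hu (hW i)) _.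
rewrite [_ + vnorm (u - u')]addrC -addrA lerD2l.
by [].
Qed.


Lemma add_cs (x T Q n : R) : 0 <= n -> 0 <= Q -> T ^+ 2 <= n * Q ->
  (x + T) ^+ 2 <= (n + 1) * (x ^+ 2 + Q).
Proof.
move=> hn hQ hT; case: (ltrP 0 n) => hn'.
  have h : 0 <= n * ((n + 1) * (x ^+ 2 + Q) - (x + T) ^+ 2).
    have := sqr_ge0 (n * x - T); nra.
  rewrite -subr_ge0; move: h; rewrite pmulr_rge0 //.
have n0 : n = 0 by apply/eqP; rewrite eq_le hn hn'.
rewrite n0 mul0r in hT.
have T0 : T = 0.
  by apply/eqP; rewrite -sqrf_eq0 eq_le hT sqr_ge0.
by rewrite n0 T0 addr0 add0r mul1r lerDl.
Qed.

Lemma fin_ineq (n s T Q V : R) : 0 <= n -> 0 <= s -> 0 <= T -> 0 <= Q -> 0 <= V ->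
  T ^+ 2 <= Q * n -> V ^+ 2 = s ^+ 2 + Q -> n * s + T <= (n + 1) * V.
Proof.
move=> hn hs hT hQ hV hTQ hVs.
have h1 : 0 <= (n + 1) * (Q * n - T ^+ 2) by rewrite mulr_ge0 ?subr_ge0 // addr_ge0.
have h2 : 0 <= n * (s - T) ^+ 2 by rewrite mulr_ge0 // sqr_ge0.
have h3 : 0 <= (n + 1) * (s ^+ 2 + Q) by rewrite mulr_ge0 ?addr_ge0 // sqr_ge0.
have h4 : (n * s + T) ^+ 2 <= ((n + 1) * V) ^+ 2.
  rewrite exprMn hVs; nra.
have h5 : 0 <= (n + 1) * V by rewrite mulr_ge0 // addr_ge0.
nra.
Qed.

Lemma max_lip (al p1 p2 q1 q2 : R) : 0 < al ->
  `|Num.max 0 (1 - al * (p1 - p2)) - Num.max 0 (1 - al * (q1 - q2))|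
  <= al * (`|p1 - q1| + `|p2 - q2|).
Proof.
move=> hal.
have a1 : p1 - q1 <= `|p1 - q1| := ler_norm _.
have a2 : q1 - p1 <= `|p1 - q1| by rewrite -normrN opprB ler_norm.
have a3 : p2 - q2 <= `|p2 - q2| := ler_norm _.
have a4 : q2 - p2 <= `|p2 - q2| by rewrite -normrN opprB ler_norm.
have b1 : al * (p1 - q1) <= al * `|p1 - q1| by rewrite ler_wpM2l // ltW.
have b2 : al * (q1 - p1) <= al * `|p1 - q1| by rewrite ler_wpM2l // ltW.
have b3 : al * (p2 - q2) <= al * `|p2 - q2| by rewrite ler_wpM2l // ltW.
have b4 : al * (q2 - p2) <= al * `|p2 - q2| by rewrite ler_wpM2l // ltW.
rewrite ler_norml !maxEle.
case: ifP => h1; case: ifP => h2; apply/andP; split; rewrite ?mulrDr; nra.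
Qed.


Lemma loss_lip m (al : R) (h h' : 'cV[R]_m) (y : 'I_m) : 0 < al ->
  `|loss al h y - loss al h' y| <= al * vnorm (h - h').
Proof.
move=> hal; rewrite /loss -mulrBr -sumrB normrM ger0_norm ?invr_ge0 ?ler0n //.
set d := fun i => h i 0 - h' i 0.
set n := \sum_(y' < m | y' != y) (1 : R).
set T := \sum_(y' < m | y' != y) `|d y'|.
set Q := \sum_(y' < m | y' != y) d y' ^+ 2.
have h1 : `|\sum_(y' < m | y' != y)
     (Num.max 0 (1 - al * (h y 0 - h y' 0)) - Num.max 0 (1 - al * (h' y 0 - h' y' 0)))|
   <= al * (n * `|d y| + T).
  apply: le_trans (ler_norm_sum _ _ _) _.
  have -> : al * (n * `|d y| + T) =
     \sum_(y' < m | y' != y) al * (`|d y| + `|d y'|).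
    rewrite -mulr_sumr big_split /= /T /n mulr_suml; congr (al * (_ + _)).
    by apply: eq_bigr => i _; rewrite mul1r.
  apply: ler_sum => i _; exact: max_lip.
have hm : n + 1 = m%:R.
  have := sumr_const (fun _ : 'I_m => true) (1 : R).
  rewrite card_ord (bigD1 y) //= addrC => <-.
  by [].
have hTQ : T ^+ 2 <= Q * n.
  have := CS _ (fun y' : 'I_m => y' != y) (fun i => `|d i|) (fun _ => 1).
  rewrite /T /Q /n.
  have -> : \sum_(i < m | i != y) `|d i| * 1 = \sum_(i < m | i != y) `|d i|.
    by apply: eq_bigr => i _; rewrite mulr1.
  have -> : \sum_(i < m | i != y) `|d i| ^+ 2 = \sum_(i < m | i != y) d i ^+ 2.
    by apply: eq_bigr => i _; rewrite real_normK // num_real.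
  have -> : \sum_(i < m | i != y) (1 : R) ^+ 2 = \sum_(i < m | i != y) 1.
    by apply: eq_bigr => i _; rewrite expr1n.
  by [].
have hV : vnorm (h - h') ^+ 2 = `|d y| ^+ 2 + Q.
  rewrite vnorm_sq (bigD1 y) //= real_normK ?num_real // /d mxE.
  rewrite mxE; congr (_ + _); apply: eq_bigr => i _; rewrite !mxE.
  by [].
have hn : 0 <= n by apply: sumr_ge0.
have hT : 0 <= T by apply: sumr_ge0 => i _; exact: normr_ge0.
have hQ : 0 <= Q by apply: sumr_ge0 => i _; exact: sqr_ge0.
have key := fin_ineq _ _ _ _ _ hn (normr_ge0 (d y)) hT hQ (vnorm_ge0 _ (h - h')) hTQ hV.
rewrite hm in key.
have m0 : 0 < m%:R :> R by rewrite -hm ltr_pwDr.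
rewrite mulrC; apply: le_trans (ler_wpM2r _ h1) _; first by rewrite invr_ge0 ltW.
rewrite -mulrA; apply: ler_wpM2l; first exact: ltW.
by rewrite ler_pdivrMr //; lra.
Qed.


Lemma fold_le1 (I : Type) N (a : R) (Wf : I -> 'M[R]_N) (bf : I -> 'cV[R]_N)
  (s : seq I) (u : 'cV[R]_N) : vnorm u <= 1 ->
  vnorm (foldl (fun u i => layer a (Wf i) (bf i) u) u s) <= 1.
Proof. elim: s u => [|i s IH] u hu //=; apply: IH; exact: proj_le1. Qed.

Lemma net_lip m N n k (a : R) (w w' : params R m N n k) (x : 'cV[R]_n) :
  0 < a -> a < 1 -> weights_bounded w -> weights_bounded w' -> vnorm x <= 1 ->
  vnorm (net a w x - net a w' x) <=
  frob (pW w - pW w') + vnorm (pb w - pb w') + frob (pW1 w - pW1 w') + vnorm (pb1 w - pb1 w')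
  + \sum_(l < k) (frob (pWh w l - pWh w' l) + vnorm (pbh w l - pbh w' l)).
Proof.
move=> ha0 ha1 [hW [hW1 hWh]] [hW' [hW1' hWh']] hx.
rewrite /net.
set u1 := layer a (pW1 w) (pb1 w) x.
set u1' := layer a (pW1 w') (pb1 w') x.
have hu1 : vnorm u1 <= 1 by apply: proj_le1.
have hK := fold_le1 _ _ a (pWh w) (pbh w) (enum 'I_k) u1 hu1.
apply: le_trans (aff_lip _ _ _ _ _ _ _ _ hK hW') _.
have hF := fold_lip _ _ a (pWh w) (pWh w') (pbh w) (pbh w') (enum 'I_k) u1 u1' ha0 ha1 hWh' hu1.
rewrite big_enum /= in hF.
have h1 : vnorm (u1 - u1') <= frob (pW1 w - pW1 w') + vnorm (pb1 w - pb1 w').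
  apply: le_trans (layer_lip _ _ _ _ _ _ _ _ _ ha0 ha1 hx hW1') _.
  by rewrite subrr vnorm0 addr0.
lra.
Qed.


Lemma final_ineq k (eW eb eW1 eb1 : R) (eWh ebh : 'I_k -> R) :
  0 <= eW -> 0 <= eb -> 0 <= eW1 -> 0 <= eb1 ->
  (forall l, 0 <= eWh l) -> (forall l, 0 <= ebh l) ->
  (eW + eb + eW1 + eb1 + \sum_(l < k) (eWh l + ebh l)) ^+ 2 <=
  2 * (k%:R + 3) * (eW ^+ 2 + eW1 ^+ 2 + \sum_(l < k) eWh l ^+ 2
                   + eb ^+ 2 + eb1 ^+ 2 + \sum_(l < k) ebh l ^+ 2).
Proof.
move=> h1 h2 h3 h4 h5 h6.
set Z := \sum_(l < k) (eWh l + ebh l).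
set Qh := \sum_(l < k) eWh l ^+ 2 + \sum_(l < k) ebh l ^+ 2.
have hQh : 0 <= Qh by rewrite addr_ge0 // sumr_ge0 // => l _; apply: sqr_ge0.
have hZ : Z ^+ 2 <= k%:R * (2 * Qh).
  have := CS _ (fun _ : 'I_k => true) (fun l => eWh l + ebh l) (fun _ => 1).
  have -> : \sum_(l < k) (eWh l + ebh l) * 1 = Z by apply: eq_bigr => l _; rewrite mulr1.
  have -> : \sum_(l < k) (1 : R) ^+ 2 = k%:R.
    by rewrite (eq_bigr (fun _ => 1)) ?sumr_const ?card_ord // => l _; rewrite expr1n.
  move=> h; apply: le_trans h _; rewrite mulrC ler_wpM2l ?ler0n //.
  rewrite /Qh mulrDr !mulr_sumr -big_split; apply: ler_sum => l _.
  rewrite /=; have := sqr_ge0 (eWh l - ebh l); nra.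
have hB : (eW1 + eb1 + Z) ^+ 2 <= (k%:R + 1) * ((eW1 + eb1) ^+ 2 + 2 * Qh).
  by apply: add_cs => //; rewrite mulr_ge0.
set Q2 := (eW1 + eb1) ^+ 2 + 2 * Qh.
have hQ2 : 0 <= Q2 by rewrite addr_ge0 ?sqr_ge0 // mulr_ge0.
have hA : (eW + eb + (eW1 + eb1 + Z)) ^+ 2 <= (k%:R + 1 + 1) * ((eW + eb) ^+ 2 + Q2).
  apply: add_cs => //; rewrite addr_ge0 ?ler0n //.
have -> : eW + eb + eW1 + eb1 + Z = eW + eb + (eW1 + eb1 + Z) by ring.
apply: le_trans hA _.
have k0 : 0 <= k%:R :> R by exact: ler0n.
have q1 : (eW + eb) ^+ 2 <= 2 * (eW ^+ 2 + eb ^+ 2).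
  have := sqr_ge0 (eW - eb); nra.
have q2 : (eW1 + eb1) ^+ 2 <= 2 * (eW1 ^+ 2 + eb1 ^+ 2).
  have := sqr_ge0 (eW1 - eb1); nra.
have : (eW + eb) ^+ 2 + Q2 <= 2 * (eW ^+ 2 + eW1 ^+ 2 + \sum_(l < k) eWh l ^+ 2
                   + eb ^+ 2 + eb1 ^+ 2 + \sum_(l < k) ebh l ^+ 2).
  rewrite /Q2 /Qh in q2 *; lra.
move=> h.
have hP : 0 <= (eW + eb) ^+ 2 + Q2 by rewrite addr_ge0 ?sqr_ge0.
nra.
Qed.

End H.

Theorem lemmaD1 (R : realType) (n N m k : nat) (a alpha : R)
    (hN : (1 <= N)%N) (ha0 : 0 < a) (ha1 : a < 1) (halpha : 0 < alpha)
    (w w' : params R m N n k)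
    (hw : weights_bounded w) (hw' : weights_bounded w')
    (x : 'cV[R]_n) (hx : vnorm x <= 1) (y : 'I_m) :
  `| loss alpha (net a w x) y - loss alpha (net a w' x) y |
    <= alpha * Num.sqrt (2 * (k.+1 + 2)%:R) * pdist w w'.
Proof.
have hL := loss_lip _ _ _ (net a w x) (net a w' x) y halpha.
have hNt := net_lip _ _ _ _ _ a w w' x ha0 ha1 hw hw' hx.
have hF := final_ineq _ _ (frob (pW w - pW w')) (vnorm (pb w - pb w'))
  (frob (pW1 w - pW1 w')) (vnorm (pb1 w - pb1 w'))
  (fun l => frob (pWh w l - pWh w' l)) (fun l => vnorm (pbh w l - pbh w' l))
  (frob_ge0 _ _ _ _) (vnorm_ge0 _ _ _) (frob_ge0 _ _ _ _) (vnorm_ge0 _ _ _)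
  (fun l => frob_ge0 _ _ _ _) (fun l => vnorm_ge0 _ _ _).
have hP : pdist2 w w' =
  frob (pW w - pW w') ^+ 2 + frob (pW1 w - pW1 w') ^+ 2
  + \sum_(l < k) frob (pWh w l - pWh w' l) ^+ 2
  + vnorm (pb w - pb w') ^+ 2 + vnorm (pb1 w - pb1 w') ^+ 2
  + \sum_(l < k) vnorm (pbh w l - pbh w' l) ^+ 2.
  rewrite /pdist2; congr (_ + _ + _ + _ + _ + _).
  - rewrite frob_sq; apply: eq_bigr => i _; apply: eq_bigr => j _; by rewrite !mxE.
  - rewrite frob_sq; apply: eq_bigr => i _; apply: eq_bigr => j _; by rewrite !mxE.
  - apply: eq_bigr => l _; rewrite frob_sq; apply: eq_bigr => i _; apply: eq_bigr => j _; by rewrite !mxE.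
  - rewrite vnorm_sq; apply: eq_bigr => i _; by rewrite !mxE.
  - rewrite vnorm_sq; apply: eq_bigr => i _; by rewrite !mxE.
  - apply: eq_bigr => l _; rewrite vnorm_sq; apply: eq_bigr => i _; by rewrite !mxE.
rewrite /= -hP in hF.
rewrite /pdist -mulrA; apply: le_trans hL _; apply: ler_wpM2l; first exact: ltW.
apply: le_trans hNt _.
set S := _ + \sum_(l < k) _.
have hS : 0 <= S.
  rewrite /S !addr_ge0 ?frob_ge0 ?vnorm_ge0 //.
  by apply: sumr_ge0 => l _; rewrite addr_ge0 ?frob_ge0 ?vnorm_ge0.
have e : (k.+1 + 2)%:R = k%:R + 3 :> R by rewrite addSn -addnS natrD.
rewrite e -sqrtrM; last by rewrite mulr_ge0 // addr_ge0.
rewrite -(ger0_norm hS) -sqrtr_sqr ler_sqrt; first exact: hF.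
apply: mulr_ge0; first by rewrite mulr_ge0 // addr_ge0.
have hs1 : 0 <= \sum_(l < k) frob (pWh w l - pWh w' l) ^+ 2
  by apply: sumr_ge0 => l _; apply: sqr_ge0.
have hs2 : 0 <= \sum_(l < k) vnorm (pbh w l - pbh w' l) ^+ 2
  by apply: sumr_ge0 => l _; apply: sqr_ge0.
rewrite hP !addr_ge0 ?sqr_ge0 //.
Qed.
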